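(* Let $(\Gamma,f,\mu)$ be a measured Reeb graph with no boundary vertices. Then the set of totally negative circulation functions on $\Gamma$ is a (possibly empty) open convex polytope in the affine space of all circulation functions on $\Gamma$. In particular, the set of totally negative circulation functions on $\Gamma$ is bounded.
   Context: A Reeb graph $(\Gamma,f)$ is a finite connected oriented graph $\Gamma$ with a continuous function $f\colon\Gamma\to\mathbb{R}$ strictly increasing along each edge in its orientation, all of whose vertices are $1$-valent or $3$-valent ($1$-valent ones being of two types, boundary and non-boundary), such that at each $3$-valent vertex there are either two incoming and one outgoing edge or vice versa. At a $3$-valent vertex $v$ the trunk $e_0$ is the edge alone in its direction and the other two edges $e_1,e_2$ are branches. A measure $\mu$ on $\Gamma$ is log-smooth if it has a smooth non-vanishing density $d\mu/df$ at interior points and $1$-valent vertices, and near each $3$-valent vertex $v$, with $\tilde f=f-f(v)$, there are functions $\psi,\eta_0,\eta_1,\eta_2$ smooth near $0$ with $\psi(0)=0,\psi'(0)\ne0$, $\eta_0+\eta_1+\eta_2=0$, and $\mu([v,x])=\varepsilon_i\psi(\tilde f(x))\ln|\tilde f(x)|+\eta_i(\tilde f(x))$ for $x\in e_i$ near $v$, $\varepsilon_0=2,\varepsilon_1=\varepsilon_2=-1$. A measured Reeb graph is a Reeb graph with a log-smooth measure. Let $V$ be the vertex set. A circulation function on $(\Gamma,f,\mu)$ is a function $\mathfrak{c}\colon\Gamma\setminus V\to\mathbb{R}$, continuous, such that: (i) for every vertex $v$ and edge $e\ni v$, the limit of $\mathfrak{c}(x)$ as $x\to v$ along $e$ exists and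 is finite; (ii) if $x,y$ are interior points of one edge, the edge pointing from $x$ to $y$, then $\mathfrak{c}(y)-\mathfrak{c}(x)=\int_{[x,y]}f\,d\mu$; (iii) at every non-boundary vertex $v$, the sum of the limits of $\mathfrak{c}$ at $v$ along edges pointing into $v$ equals the sum of the limits along edges pointing out of $v$. The set of circulation functions is an affine space (possibly empty). For a $3$-valent vertex $v$ with adjacent edges $e_0,e_1,e_2$ let $c_i(v)$ be the limit of $\mathfrak{c}$ at $v$ along $e_i$; $\mathfrak{c}$ is totally negative if $c_0(v),c_1(v),c_2(v)<0$ for every $3$-valent vertex $v$. *)

(* Defs.v *)
From Stdlib Require Import Reals Lra List ClassicalEpsilon.
From Stdlib Require Import Relations Relation_Operators FinFun.
From Coquelicot Require Import Coquelicot.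
Open Scope R_scope.

(** The function f is given by its vertex values [fv]; since f is
    continuous and strictly increasing along each edge, f maps the closed edge
    homeomorphically onto [fv (src e), fv (tgt e)], so a point in the interior
    of edge [e] is identified with its f-value [t], fv(src e) < t < fv(tgt e). *)

Record ReebGraph := {
  rV : Type;
  rE : Type;
  src : rE -> rV;
  tgt : rE -> rV;
  fv : rV -> R;
  lE : list rE;
  lE_listing : Listing lE;
  V_finite : FinFun.Finite rV;
  V_inhabited : inhabited rV;
  edge_incr : forall e, fv (src e) < fv (tgt e);
  connected : forall u v : rV,
    clos_refl_trans rV (fun x y => exists e, (src e = x /\ tgt e = y) \/ (src e = y /\ tgt e = x)) u v;
  valence : forall v : rV,
    (exists e, (src e = v \/ tgt e = v) /\ forall e', (src e' = v \/ tgt e' = v) -> e' = e)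
    \/
    (exists e0 e1 e2, e1 <> e2 /\
       ((tgt e1 = v /\ tgt e2 = v /\ src e0 = v) \/ (src e1 = v /\ src e2 = v /\ tgt e0 = v)) /\
       forall e, (src e = v \/ tgt e = v) -> e = e0 \/ e = e1 \/ e = e2)
}.

Arguments src {_}. Arguments tgt {_}. Arguments fv {_}.

Definition ea {G : ReebGraph} (e : rE G) : R := fv (src e).
Definition eb {G : ReebGraph} (e : rE G) : R := fv (tgt e).

Definition univalent {G : ReebGraph} (v : rV G) : Prop :=
  exists e, (src e = v \/ tgt e = v) /\ forall e', (src e' = v \/ tgt e' = v) -> e' = e.

Definition trivalent_config {G : ReebGraph} (v : rV G) (e0 e1 e2 : rE G) : Prop :=
  e1 <> e2 /\
  ((tgt e1 = v /\ tgt e2 = v /\ src e0 = v) \/ (src e1 = v /\ src e2 = v /\ tgt e0 = v)) /\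
  forall e, (src e = v \/ tgt e = v) -> e = e0 \/ e = e1 \/ e = e2.

Definition trivalent {G : ReebGraph} (v : rV G) : Prop :=
  exists e0 e1 e2, trivalent_config v e0 e1 e2.

Definition smooth_near0 (g : R -> R) (d : R) : Prop :=
  forall (n : nat) (t : R), Rabs t < d -> ex_derive_n g n t.

(** [mu_from_vertex rho e v x m] : for a point x (f-value) on edge [e] incident
    to [v], the measure mu([v,x]) of the segment between v and x equals [m];
    mu has density [rho e] with respect to f on edge e (improper integral at v). *)
Definition mu_seg {G : ReebGraph} (rho : rE G -> R -> R) (e : rE G) (v : rV G)
  (x : R) (m : R) : Prop :=
  (src e = v -> is_RInt_gen (rho e) (at_right (fv v)) (at_point x) m) /\
  (tgt e = v -> is_RInt_gen (rho e) (at_point x) (at_left (fv v)) m).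

Definition log_smooth_at {G : ReebGraph} (rho : rE G -> R -> R)
  (v : rV G) (e0 e1 e2 : rE G) : Prop :=
  exists (d : R) (psi eta0 eta1 eta2 : R -> R),
    0 < d /\
    smooth_near0 psi d /\ smooth_near0 eta0 d /\
    smooth_near0 eta1 d /\ smooth_near0 eta2 d /\
    psi 0 = 0 /\ Derive psi 0 <> 0 /\
    (forall t, Rabs t < d -> eta0 t + eta1 t + eta2 t = 0) /\
    (forall x, ea e0 < x < eb e0 -> 0 < Rabs (x - fv v) < d ->
       mu_seg rho e0 v x (2 * psi (x - fv v) * ln (Rabs (x - fv v)) + eta0 (x - fv v))) /\
    (forall x, ea e1 < x < eb e1 -> 0 < Rabs (x - fv v) < d ->
       mu_seg rho e1 v x (- psi (x - fv v) * ln (Rabs (x - fv v)) + eta1 (x - fv v))) /\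
    (forall x, ea e2 < x < eb e2 -> 0 < Rabs (x - fv v) < d ->
       mu_seg rho e2 v x (- psi (x - fv v) * ln (Rabs (x - fv v)) + eta2 (x - fv v))).

Definition smooth_density_at_end {G : ReebGraph} (rho : rE G -> R -> R) (e : rE G)
  (v : rV G) : Prop :=
  exists (g : R -> R) (d : R), 0 < d /\ g (fv v) <> 0 /\
    (forall n t, Rabs (t - fv v) < d -> ex_derive_n g n t) /\
    (forall t, ea e < t < eb e -> Rabs (t - fv v) < d -> rho e t = g t).

(** A measured Reeb graph: a Reeb graph with a log-smooth (positive) measure,
    given on each edge by its density [rho e] with respect to f. *)
Record MeasuredReebGraph := {
  mG :> ReebGraph;
  rho : rE mG -> R -> R;
  rho_interior : forall e t, ea e < t < eb e ->
      0 < rho e t /\ forall n, ex_derive_n (rho e) n t;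
  rho_univalent : forall (v : rV mG) e, univalent v -> (src e = v \/ tgt e = v) ->
      smooth_density_at_end rho e v;
  rho_trivalent : forall (v : rV mG) e0 e1 e2, trivalent_config v e0 e1 e2 ->
      log_smooth_at rho v e0 e1 e2
}.

Definition sum_edges {G : ReebGraph} (P : rE G -> Prop) (F : rE G -> R) : R :=
  fold_right Rplus 0
    (map F (filter (fun e => if excluded_middle_informative (P e) then true else false)
                   (lE G))).

(** Circulation functions: c e t is the value at the point of f-value t
    in the interior of edge e (values outside the interior are irrelevant).
    The graph has no boundary vertices, so (iii) is imposed at every vertex. *)
Definition is_circulation (M : MeasuredReebGraph) (c : rE M -> R -> R) : Prop :=
  (forall e t, ea e < t < eb e -> continuous (c e) t) /\
  exists Ls Lt : rE M -> R,
    (forall e, filterlim (c e) (at_right (ea e)) (locally (Ls e)) /\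
               filterlim (c e) (at_left (eb e)) (locally (Lt e))) /\
    (forall e x y, ea e < x -> x < y -> y < eb e ->
       c e y - c e x = RInt (fun t => t * rho M e t) x y) /\
    (forall v : rV M,
       sum_edges (fun e => tgt e = v) Lt = sum_edges (fun e => src e = v) Ls).

Definition totally_negative (M : MeasuredReebGraph) (c : rE M -> R -> R) : Prop :=
  forall e : rE M,
    (trivalent (src e) -> exists l, l < 0 /\ filterlim (c e) (at_right (ea e)) (locally l)) /\
    (trivalent (tgt e) -> exists l, l < 0 /\ filterlim (c e) (at_left (eb e)) (locally l)).

Definition TN (M : MeasuredReebGraph) (c : rE M -> R -> R) : Prop :=
  is_circulation M c /\ totally_negative M c.

Definition comb {M : MeasuredReebGraph} (lam : R) (c c' : rE M -> R -> R) : rE M -> R -> R :=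
  fun e t => lam * c e t + (1 - lam) * c' e t.

(* Main.v *)
Require Import Defs.
From Stdlib Require Import Reals Lra List FinFun ClassicalEpsilon Classical.
From Coquelicot Require Import Coquelicot.
Open Scope R_scope.

Lemma lim_eps {T} (F : (T -> Prop) -> Prop) {FF : Filter F} (f : T -> R) (l : R) :
  filterlim f F (locally l) <-> forall eps, 0 < eps -> F (fun x => Rabs (f x - l) < eps).
Proof.
  rewrite filterlim_locally. split.
  - intros H eps He. specialize (H (mkposreal eps He)).
    eapply filter_imp; [|exact H]. intros x Hx. exact Hx.
  - intros H eps. eapply filter_imp; [|exact (H eps (cond_pos eps))].
    intros x Hx. exact Hx.
Qed.

Lemma lim_fwd {T} (F : (T -> Prop) -> Prop) (FF : Filter F) (f : T -> R) (l : R) :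
  filterlim f F (locally l) -> forall eps, 0 < eps -> F (fun x => Rabs (f x - l) < eps).
Proof. apply (@lim_eps T F FF f l). Qed.
Lemma lim_bwd {T} (F : (T -> Prop) -> Prop) (FF : Filter F) (f : T -> R) (l : R) :
  (forall eps, 0 < eps -> F (fun x => Rabs (f x - l) < eps)) -> filterlim f F (locally l).
Proof. apply (@lim_eps T F FF f l). Qed.

Lemma lim_unique {T} (F : (T -> Prop) -> Prop) {FF : ProperFilter F} (f : T -> R) l l' :
  filterlim f F (locally l) -> filterlim f F (locally l') -> l = l'.
Proof.
  intros H1 H2. destruct (Req_dec l l') as [|Hn]; auto. exfalso.
  set (d := Rabs (l - l') / 2).
  assert (Hd : 0 < d) by (unfold d; assert (0 < Rabs (l - l')) by (apply Rabs_pos_lt; lra); lra).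
  pose proof (proj1 (@lim_eps _ F filter_filter f l) H1) as H1'.
  pose proof (proj1 (@lim_eps _ F filter_filter f l') H2) as H2'.
  destruct (filter_ex _ (filter_and _ _ (H1' d Hd) (H2' d Hd))) as [x [A B]].
  assert (Rabs (l - l') <= Rabs (f x - l) + Rabs (f x - l')).
  { replace (l - l') with (-(f x - l) + (f x - l')) by ring.
    eapply Rle_trans; [apply Rabs_triang|]. rewrite Rabs_Ropp. lra. }
  unfold d in *; lra.
Qed.

Lemma ballR (x e y : R) : ball x e y -> Rabs (y - x) < e.
Proof. intro H; exact H. Qed.

Lemma ev_right (a b : R) : a < b -> at_right a (fun t => a < t < b).
Proof.
  intros H. exists (mkposreal (b - a) ltac:(lra)). intros y Hy Hay.
  apply ballR in Hy. simpl in Hy. apply Rabs_def2 in Hy. destruct Hy; split; lra.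
Qed.
Lemma ev_left (a b : R) : a < b -> at_left b (fun t => a < t < b).
Proof.
  intros H. exists (mkposreal (b - a) ltac:(lra)). intros y Hy Hay.
  apply ballR in Hy. simpl in Hy. apply Rabs_def2 in Hy. destruct Hy; split; lra.
Qed.

Lemma lim_lin {T} (F : (T -> Prop) -> Prop) {FF : Filter F} (f g : T -> R) a b lam mu :
  filterlim f F (locally a) -> filterlim g F (locally b) ->
  filterlim (fun x => lam * f x + mu * g x) F (locally (lam * a + mu * b)).
Proof.
  intros Hf Hg. apply (lim_bwd F FF). pose proof (lim_fwd F FF _ _ Hf) as Hf'. pose proof (lim_fwd F FF _ _ Hg) as Hg'. clear Hf Hg. rename Hf' into Hf. rename Hg' into Hg.
  intros eps He.
  set (d := eps / (Rabs lam + Rabs mu + 1)).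
  assert (Hp : 0 < Rabs lam + Rabs mu + 1) by (pose proof (Rabs_pos lam); pose proof (Rabs_pos mu); lra).
  assert (Hd : 0 < d) by (unfold d; apply Rdiv_lt_0_compat; lra).
  assert (Hdd : (Rabs lam + Rabs mu + 1) * d = eps) by (unfold d; field; lra).
  eapply filter_imp; [|exact (filter_and _ _ (Hf d Hd) (Hg d Hd))].
  intros x [A B].
  replace (lam * f x + mu * g x - (lam * a + mu * b)) with (lam * (f x - a) + mu * (g x - b)) by ring.
  eapply Rle_lt_trans; [apply Rabs_triang|]. rewrite !Rabs_mult.
  pose proof (Rabs_pos lam); pose proof (Rabs_pos mu).
  pose proof (Rabs_pos (f x - a)); pose proof (Rabs_pos (g x - b)).
  assert (Rabs lam * Rabs (f x - a) <= Rabs lam * d) by (apply Rmult_le_compat_l; lra).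
  assert (Rabs mu * Rabs (g x - b) <= Rabs mu * d) by (apply Rmult_le_compat_l; lra).
  nra.
Qed.

Lemma lim_neg_stable {T} (F : (T -> Prop) -> Prop) {FF : ProperFilter F} (f g : T -> R) l l' eps :
  filterlim f F (locally l) -> filterlim g F (locally l') -> l < 0 -> eps <= - l / 2 ->
  F (fun x => Rabs (g x - f x) < eps) -> l' < 0.
Proof.
  intros Hf Hg Hl He HF.
  pose proof (proj1 (@lim_eps _ F filter_filter f l) Hf) as Hf'.
  pose proof (proj1 (@lim_eps _ F filter_filter g l') Hg) as Hg'.
  destruct (Rlt_or_le l' 0) as [|Hl']; auto. exfalso.
  assert (Hd : 0 < - l / 4) by lra.
  destruct (filter_ex _ (filter_and _ _ HF (filter_and _ _ (Hf' _ Hd) (Hg' _ Hd)))) as [x [A [B C]]].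
  apply Rabs_def2 in A; apply Rabs_def2 in B; apply Rabs_def2 in C.
  destruct A, B, C; lra.
Qed.

Lemma cont_bounded (g : R -> R) a b la lb :
  a < b -> (forall t, a < t < b -> continuous g t) ->
  filterlim g (at_right a) (locally la) -> filterlim g (at_left b) (locally lb) ->
  exists B, forall t, a < t < b -> Rabs (g t) <= B.
Proof.
  intros Hab Hc Ha Hb.
  pose proof (lim_fwd _ _ _ _ Ha) as Ha'. pose proof (lim_fwd _ _ _ _ Hb) as Hb'. clear Ha Hb. rename Ha' into Ha. rename Hb' into Hb.
  destruct (Ha 1 Rlt_0_1) as [d1 H1]. destruct (Hb 1 Rlt_0_1) as [d2 H2].
  pose proof (cond_pos d1); pose proof (cond_pos d2).
  set (p := Rmin (a + d1/2) ((a+b)/2)). set (q := Rmax (b - d2/2) ((a+b)/2)).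
  assert (Hp1 : a < p) by (unfold p; apply Rmin_glb_lt; lra).
  assert (Hp2 : p <= (a+b)/2) by (unfold p; apply Rmin_r).
  assert (Hq1 : q < b) by (unfold q; apply Rmax_lub_lt; lra).
  assert (Hq2 : (a+b)/2 <= q) by (unfold q; apply Rmax_r).
  assert (Hpq : p <= q) by lra.
  assert (Hcp : forall c, p <= c <= q -> continuity_pt g c).
  { intros c Hc'. apply continuity_pt_filterlim. apply Hc. split; lra. }
  destruct (continuity_ab_maj g p q Hpq Hcp) as [Mx [HM _]].
  destruct (continuity_ab_min g p q Hpq Hcp) as [mx [Hm _]].
  exists (Rmax (Rmax (Rabs la + 1) (Rabs lb + 1)) (Rmax (Rabs (g Mx)) (Rabs (g mx)))).
  intros t Ht.
  destruct (Rlt_or_le t p) as [Htp|Htp].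
  - assert (Hb1 : ball a d1 t).
    { assert (t < a + d1/2) by (eapply Rlt_le_trans; [exact Htp|apply Rmin_l]).
      change (Rabs (t - a) < d1). rewrite Rabs_right by lra. lra. }
    specialize (H1 t Hb1 (proj1 Ht)).
    assert (Rabs (g t) <= Rabs la + 1).
    { replace (g t) with (la + (g t - la)) by ring.
      eapply Rle_trans; [apply Rabs_triang|]. lra. }
    eapply Rle_trans; [|apply Rmax_l]. eapply Rle_trans; [|apply Rmax_l]. auto.
  - destruct (Rlt_or_le q t) as [Htq|Htq].
    + assert (Hb1 : ball b d2 t).
      { assert (b - d2/2 < t) by (eapply Rle_lt_trans; [apply Rmax_l|exact Htq]).
        change (Rabs (t - b) < d2). rewrite Rabs_left by lra. lra. }
      specialize (H2 t Hb1 (proj2 Ht)).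
      assert (Rabs (g t) <= Rabs lb + 1).
      { replace (g t) with (lb + (g t - lb)) by ring.
        eapply Rle_trans; [apply Rabs_triang|]. lra. }
      eapply Rle_trans; [|apply Rmax_l]. eapply Rle_trans; [|apply Rmax_r]. auto.
    + specialize (HM t (conj Htp Htq)). specialize (Hm t (conj Htp Htq)).
      eapply Rle_trans; [|apply Rmax_r].
      unfold Rabs at 1; destruct (Rcase_abs (g t)).
      * eapply Rle_trans; [|apply Rmax_r]. pose proof (Rle_abs (- g mx)) as HH.
        rewrite Rabs_Ropp in HH. lra.
      * eapply Rle_trans; [|apply Rmax_l]. pose proof (Rle_abs (g Mx)). lra.
Qed.

Definition sumL {A} (l : list A) (F : A -> R) : R := fold_right Rplus 0 (map F l).

Lemma sumL_nil {A} (F : A -> R) : sumL nil F = 0.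
Proof. reflexivity. Qed.
Lemma sumL_cons {A} x l (F : A -> R) : sumL (x :: l) F = F x + sumL l F.
Proof. reflexivity. Qed.

Lemma sumL_ext {A} (l : list A) F G : (forall x, In x l -> F x = G x) -> sumL l F = sumL l G.
Proof.
  induction l; intros H; auto. rewrite !sumL_cons. rewrite H by (left; auto).
  rewrite IHl; auto. intros x Hx; apply H; right; auto.
Qed.

Lemma sumL_lin {A} (l : list A) F G a b :
  sumL l (fun x => a * F x + b * G x) = a * sumL l F + b * sumL l G.
Proof. induction l; [unfold sumL; simpl; ring|]. rewrite !sumL_cons, IHl. ring. Qed.

Lemma sumL_scal {A} (l : list A) F a : sumL l (fun x => a * F x) = a * sumL l F.
Proof. induction l; [unfold sumL; simpl; ring|]. rewrite !sumL_cons, IHl. ring. Qed.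

Lemma sumL_minus {A} (l : list A) F G : sumL l (fun x => F x - G x) = sumL l F - sumL l G.
Proof. induction l; [unfold sumL; simpl; ring|]. rewrite !sumL_cons, IHl. ring. Qed.

Lemma sumL_zero {A} (l : list A) F : (forall x, In x l -> F x = 0) -> sumL l F = 0.
Proof.
  intros H. induction l; auto. rewrite sumL_cons, H by (left; auto).
  rewrite IHl; [ring|]. intros; apply H; right; auto.
Qed.

Lemma sumL_swap {A B} (l1 : list A) (l2 : list B) F :
  sumL l1 (fun a => sumL l2 (fun b => F a b)) = sumL l2 (fun b => sumL l1 (fun a => F a b)).
Proof.
  induction l1.
  - rewrite sumL_nil. symmetry. apply sumL_zero. intros; apply sumL_nil.
  - rewrite sumL_cons, IHl1.
    transitivity (sumL l2 (fun b => 1 * F a b + 1 * sumL l1 (fun a0 => F a0 b))).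
    + rewrite sumL_lin, !Rmult_1_l. reflexivity.
    + apply sumL_ext. intros. rewrite sumL_cons. ring.
Qed.

Lemma sumL_single {A} (l : list A) (P : A -> Prop) (x : A) (h : A -> R) :
  NoDup l -> In x l -> (forall y, P y <-> x = y) ->
  sumL l (fun y => if excluded_middle_informative (P y) then h y else 0) = h x.
Proof.
  intros Hn Hi HP. induction l as [|a l IH]; [destruct Hi|].
  rewrite sumL_cons. inversion Hn; subst.
  destruct Hi as [->|Hi].
  - destruct (excluded_middle_informative (P x)) as [_|n]; [|exfalso; apply n, HP; auto].
    rewrite sumL_zero; [ring|]. intros y Hy.
    destruct (excluded_middle_informative (P y)) as [p|]; auto.
    apply HP in p; subst; contradiction.
  - destruct (excluded_middle_informative (P a)) as [p|].
    + apply HP in p; subst; contradiction.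
    + rewrite IH; auto. ring.
Qed.

Lemma sumL_le {A} (l : list A) F x : (forall y, In y l -> 0 <= F y) -> In x l -> F x <= sumL l F.
Proof.
  induction l; intros H Hx; [destruct Hx|]. rewrite sumL_cons.
  assert (0 <= sumL l F).
  { clear Hx IHl. induction l; [unfold sumL; simpl; lra|]. rewrite sumL_cons.
    assert (0 <= F a0) by (apply H; right; left; auto).
    assert (0 <= sumL l F) by (apply IHl; intros y Hy; apply H; destruct Hy; [left|right;right]; auto).
    lra. }
  destruct Hx as [->|Hx].
  - lra.
  - assert (0 <= F a) by (apply H; left; auto).
    assert (F x <= sumL l F) by (apply IHl; auto; intros; apply H; right; auto). lra.
Qed.

Lemma sum_edges_eq {G : ReebGraph} (P : rE G -> Prop) F :
  sum_edges P F = sumL (lE G) (fun e => if excluded_middle_informative (P e) then F e else 0).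
Proof.
  unfold sum_edges, sumL. induction (lE G); auto. simpl.
  destruct (excluded_middle_informative (P a)); simpl; rewrite IHl; ring.
Qed.

Lemma bound_list {A} (l : list A) (Q : A -> R -> Prop) :
  (forall x, In x l -> exists B, forall B', B <= B' -> Q x B') ->
  exists B, forall B', B <= B' -> forall x, In x l -> Q x B'.
Proof.
  induction l; intros H.
  - exists 0; intros ? ? x [].
  - destruct IHl as [B1 H1]. { intros; apply H; right; auto. }
    destruct (H a (or_introl eq_refl)) as [B2 H2].
    exists (Rmax B1 B2). intros B' HB x [->|Hx].
    + apply H2. eapply Rle_trans; [apply Rmax_r|exact HB].
    + apply H1; auto. eapply Rle_trans; [apply Rmax_l|exact HB].
Qed.

Definition limR (g : R -> R) (a : R) : R :=
  epsilon (inhabits 0) (fun l => filterlim g (at_right a) (locally l)).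
Definition limL (g : R -> R) (a : R) : R :=
  epsilon (inhabits 0) (fun l => filterlim g (at_left a) (locally l)).

Lemma limR_spec g a l : filterlim g (at_right a) (locally l) -> limR g a = l.
Proof.
  intros H. unfold limR.
  pose proof (epsilon_spec (inhabits 0) (fun l => filterlim g (at_right a) (locally l)) (ex_intro _ l H)) as H'.
  exact (lim_unique (at_right a) g _ _ H' H).
Qed.
Lemma limL_spec g a l : filterlim g (at_left a) (locally l) -> limL g a = l.
Proof.
  intros H. unfold limL.
  pose proof (epsilon_spec (inhabits 0) (fun l => filterlim g (at_left a) (locally l)) (ex_intro _ l H)) as H'.
  exact (lim_unique (at_left a) g _ _ H' H).
Qed.

Definition SR {M : MeasuredReebGraph} (c : rE M -> R -> R) (e : rE M) := limR (c e) (ea e).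
Definition SL {M : MeasuredReebGraph} (c : rE M -> R -> R) (e : rE M) := limL (c e) (eb e).

Lemma sum_edges_ext {G : ReebGraph} (P : rE G -> Prop) F F' :
  (forall e, F e = F' e) -> sum_edges P F = sum_edges P F'.
Proof.
  intros H. rewrite !sum_edges_eq. apply sumL_ext. intros e _.
  destruct (excluded_middle_informative (P e)); auto.
Qed.

Lemma sum_edges_lin {G : ReebGraph} (P : rE G -> Prop) F F' a b :
  sum_edges P (fun e => a * F e + b * F' e) = a * sum_edges P F + b * sum_edges P F'.
Proof.
  rewrite !sum_edges_eq. rewrite <- sumL_lin. apply sumL_ext. intros e _.
  destruct (excluded_middle_informative (P e)); ring.
Qed.

Lemma circ_props (M : MeasuredReebGraph) c : is_circulation M c ->
  (forall e t, ea e < t < eb e -> continuous (c e) t) /\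
  (forall e, filterlim (c e) (at_right (ea e)) (locally (SR c e))) /\
  (forall e, filterlim (c e) (at_left (eb e)) (locally (SL c e))) /\
  (forall e x y, ea e < x -> x < y -> y < eb e ->
       c e y - c e x = RInt (fun t => t * rho M e t) x y) /\
  (forall v : rV M, sum_edges (fun e => tgt e = v) (SL c) = sum_edges (fun e => src e = v) (SR c)).
Proof.
  intros [Hc [Ls [Lt [Hl [Hi Hk]]]]].
  assert (ER : forall e, SR c e = Ls e) by (intros e; apply limR_spec, Hl).
  assert (EL : forall e, SL c e = Lt e) by (intros e; apply limL_spec, Hl).
  repeat split; auto.
  - intros e; rewrite ER; apply Hl.
  - intros e; rewrite EL; apply Hl.
  - intros v. rewrite (sum_edges_ext _ _ _ EL), (sum_edges_ext _ _ _ ER). apply Hk.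
Qed.

Lemma comb_circ (M : MeasuredReebGraph) c c' lam :
  is_circulation M c -> is_circulation M c' -> is_circulation M (comb lam c c').
Proof.
  intros H1 H2.
  destruct (circ_props M c H1) as [C1 [R1 [L1 [I1 K1]]]].
  destruct (circ_props M c' H2) as [C2 [R2 [L2 [I2 K2]]]].
  split.
  - intros e t Ht. unfold continuous, comb.
    apply (lim_lin (locally t) _ _ _ _ _ _ (C1 e t Ht) (C2 e t Ht)).
  - exists (fun e => lam * SR c e + (1 - lam) * SR c' e).
    exists (fun e => lam * SL c e + (1 - lam) * SL c' e).
    split; [|split].
    + intros e; split; unfold comb.
      * apply (lim_lin (at_right (ea e)) _ _ _ _ _ _ (R1 e) (R2 e)).
      * apply (lim_lin (at_left (eb e)) _ _ _ _ _ _ (L1 e) (L2 e)).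
    + intros e x y Hx Hxy Hy. unfold comb.
      replace (lam * c e y + (1 - lam) * c' e y - (lam * c e x + (1 - lam) * c' e x))
        with (lam * (c e y - c e x) + (1 - lam) * (c' e y - c' e x)) by ring.
      rewrite I1, I2 by auto. ring.
    + intros v. rewrite !sum_edges_lin, K1, K2. reflexivity.
Qed.

Lemma part2 (M : MeasuredReebGraph) :
  forall c c' lam, 0 <= lam <= 1 -> TN M c -> TN M c' -> TN M (comb lam c c').
Proof.
  intros c c' lam Hl [H1 T1] [H2 T2]. split; [apply comb_circ; auto|].
  intros e. destruct (T1 e) as [A1 B1]. destruct (T2 e) as [A2 B2]. split.
  - intros Ht. destruct (A1 Ht) as [l [Hl1 F1]]. destruct (A2 Ht) as [l' [Hl2 F2]].
    exists (lam * l + (1 - lam) * l'). split; [nra|].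
    unfold comb. apply (lim_lin (at_right (ea e)) _ _ _ _ _ _ F1 F2).
  - intros Ht. destruct (B1 Ht) as [l [Hl1 F1]]. destruct (B2 Ht) as [l' [Hl2 F2]].
    exists (lam * l + (1 - lam) * l'). split; [nra|].
    unfold comb. apply (lim_lin (at_left (eb e)) _ _ _ _ _ _ F1 F2).
Qed.

Definition Fs {M : MeasuredReebGraph} (e : rE M) (c : rE M -> R -> R) : R :=
  if excluded_middle_informative (trivalent (src e)) then SR c e else -1.
Definition Ft {M : MeasuredReebGraph} (e : rE M) (c : rE M -> R -> R) : R :=
  if excluded_middle_informative (trivalent (tgt e)) then SL c e else -1.
Definition funcs (M : MeasuredReebGraph) : list ((rE M -> R -> R) -> R) :=
  flat_map (fun e => Fs e :: Ft e :: nil) (lE M).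

Lemma funcs_affine (M : MeasuredReebGraph) f c c' lam :
  In f (funcs M) -> is_circulation M c -> is_circulation M c' ->
  f (comb lam c c') = lam * f c + (1 - lam) * f c'.
Proof.
  intros Hf H1 H2.
  destruct (circ_props M c H1) as [C1 [R1 [L1 [I1 K1]]]].
  destruct (circ_props M c' H2) as [C2 [R2 [L2 [I2 K2]]]].
  unfold funcs in Hf. apply in_flat_map in Hf. destruct Hf as [e [_ He]].
  destruct He as [<-|[<-|[]]].
  - unfold Fs. destruct (excluded_middle_informative _); [|ring].
    unfold SR. apply limR_spec. unfold comb.
    apply (lim_lin (at_right (ea e)) _ _ _ _ _ _ (R1 e) (R2 e)).
  - unfold Ft. destruct (excluded_middle_informative _); [|ring].
    unfold SL. apply limL_spec. unfold comb.
    apply (lim_lin (at_left (eb e)) _ _ _ _ _ _ (L1 e) (L2 e)).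
Qed.

Lemma part1 (M : MeasuredReebGraph) :
  exists (k : nat) (L : nat -> (rE M -> R -> R) -> R),
     (forall i c c' lam, (i < k)%nat -> is_circulation M c -> is_circulation M c' ->
        L i (comb lam c c') = lam * L i c + (1 - lam) * L i c') /\
     (forall c, TN M c <-> (is_circulation M c /\ forall i, (i < k)%nat -> L i c < 0)).
Proof.
  exists (length (funcs M)). exists (fun i c => nth i (funcs M) (fun _ => -1) c).
  split.
  - intros i c c' lam Hi H1 H2. apply funcs_affine; auto. apply nth_In; auto.
  - intros c. split.
    + intros [Hc Ht]. split; auto. intros i Hi. cbv beta.
      assert (Hin : In (nth i (funcs M) (fun _ => -1)) (funcs M)) by (apply nth_In; auto).
      revert Hin. generalize (nth i (funcs M) (fun _ => -1)). intros g Hin.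
      unfold funcs in Hin. apply in_flat_map in Hin. destruct Hin as [e [_ He]].
      destruct He as [He|[He|[]]]; rewrite <- He.
      * unfold Fs. destruct (excluded_middle_informative _) as [t|]; [|lra].
        destruct (proj1 (Ht e) t) as [l [Hl F]]. unfold SR. rewrite (limR_spec _ _ _ F). auto.
      * unfold Ft. destruct (excluded_middle_informative _) as [t|]; [|lra].
        destruct (proj2 (Ht e) t) as [l [Hl F]]. unfold SL. rewrite (limL_spec _ _ _ F). auto.
    + intros [Hc Hn]. split; auto.
      destruct (circ_props M c Hc) as [C1 [R1 [L1 [I1 K1]]]].
      assert (HinE : forall e, In e (lE M)) by (intros e; apply (proj2 (lE_listing M))).
      intros e. split.
      * intros t. exists (SR c e). split; auto.
        assert (Hin : In (Fs e) (funcs M)).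
        { unfold funcs. apply in_flat_map. exists e. split; auto. left; auto. }
        destruct (In_nth _ _ (fun _ => -1) Hin) as [i [Hi Hni]].
        specialize (Hn i Hi). cbv beta in Hn. rewrite Hni in Hn. unfold Fs in Hn.
        destruct (excluded_middle_informative _); [auto|contradiction].
      * intros t. exists (SL c e). split; auto.
        assert (Hin : In (Ft e) (funcs M)).
        { unfold funcs. apply in_flat_map. exists e. split; auto. right; left; auto. }
        destruct (In_nth _ _ (fun _ => -1) Hin) as [i [Hi Hni]].
        specialize (Hn i Hi). cbv beta in Hn. rewrite Hni in Hn. unfold Ft in Hn.
        destruct (excluded_middle_informative _); [auto|contradiction].
Qed.

Lemma min_list {A} (l : list A) (g : A -> R) :
  (forall x, In x l -> 0 < g x) -> exists eps, 0 < eps /\ forall x, In x l -> eps <= g x.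
Proof.
  induction l; intros H.
  - exists 1; split; [lra|intros x []].
  - destruct IHl as [e1 [He1 H1]]. { intros; apply H; right; auto. }
    assert (0 < g a) by (apply H; left; auto).
    exists (Rmin e1 (g a)). split; [apply Rmin_glb_lt; auto|].
    intros x [->|Hx]; [apply Rmin_r|]. eapply Rle_trans; [apply Rmin_l|auto].
Qed.

Lemma part3 (M : MeasuredReebGraph) :
  forall c, TN M c -> exists eps, 0 < eps /\
     forall c', is_circulation M c' ->
       (forall e t, ea e < t < eb e -> Rabs (c' e t - c e t) < eps) -> TN M c'.
Proof.
  intros c [Hc Ht].
  destruct (circ_props M c Hc) as [C1 [R1 [L1 [I1 K1]]]].
  assert (HS : forall e, trivalent (src e) -> SR c e < 0).
  { intros e t. destruct (proj1 (Ht e) t) as [l [Hl F]]. unfold SR. rewrite (limR_spec _ _ _ F). auto. }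
  assert (HT : forall e, trivalent (tgt e) -> SL c e < 0).
  { intros e t. destruct (proj2 (Ht e) t) as [l [Hl F]]. unfold SL. rewrite (limL_spec _ _ _ F). auto. }
  set (m := fun e : rE M => Rmin (if excluded_middle_informative (trivalent (src e)) then - SR c e / 2 else 1)
                                 (if excluded_middle_informative (trivalent (tgt e)) then - SL c e / 2 else 1)).
  destruct (min_list (lE M) m) as [eps [He Hm]].
  { intros e _. unfold m. apply Rmin_glb_lt.
    - destruct (excluded_middle_informative _) as [t|]; [specialize (HS e t); lra|lra].
    - destruct (excluded_middle_informative _) as [t|]; [specialize (HT e t); lra|lra]. }
  exists eps. split; auto.
  intros c' Hc' Hd. split; auto.
  destruct (circ_props M c' Hc') as [C2 [R2 [L2 [I2 K2]]]].
  assert (HinE : forall e, In e (lE M)) by (intros e; apply (proj2 (lE_listing M))).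
  intros e. pose proof (Hm e (HinE e)) as Hme. unfold m in Hme.
  pose proof (edge_incr (mG M) e) as Hab.
  split.
  - intros t. exists (SR c' e). split; auto.
    apply (lim_neg_stable (at_right (ea e)) (c e) (c' e) (SR c e) (SR c' e) eps (R1 e) (R2 e) (HS e t)).
    + destruct (excluded_middle_informative _); [|contradiction].
      eapply Rle_trans; [exact Hme|apply Rmin_l].
    + eapply filter_imp; [|apply (ev_right (ea e) (eb e) Hab)]. intros x Hx. apply Hd; auto.
  - intros t. exists (SL c' e). split; auto.
    apply (lim_neg_stable (at_left (eb e)) (c e) (c' e) (SL c e) (SL c' e) eps (L1 e) (L2 e) (HT e t)).
    + destruct (excluded_middle_informative (trivalent (tgt e))); [|contradiction].
      eapply Rle_trans; [exact Hme|apply Rmin_r].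
    + eapply filter_imp; [|apply (ev_left (ea e) (eb e) Hab)]. intros x Hx. apply Hd; auto.
Qed.

Lemma diff_const (M : MeasuredReebGraph) c c0 :
  is_circulation M c -> is_circulation M c0 -> forall e,
  (forall t, ea e < t < eb e -> c e t - c0 e t = SR c e - SR c0 e) /\
  SL c e - SL c0 e = SR c e - SR c0 e.
Proof.
  intros H1 H0 e.
  destruct (circ_props M c H1) as [C1 [R1 [L1 [I1 K1]]]].
  destruct (circ_props M c0 H0) as [C0 [R0 [L0 [I0 K0]]]].
  pose proof (edge_incr (mG M) e) as Hab. fold (ea e) (eb e) in Hab.
  set (mid := (ea e + eb e) / 2).
  set (K := c e mid - c0 e mid).
  assert (HK : forall t, ea e < t < eb e -> c e t - c0 e t = K).
  { intros t Ht. unfold K. destruct (Rtotal_order t mid) as [H|[H|H]].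
    - pose proof (I1 e t mid ltac:(lra) H ltac:(unfold mid; lra)).
      pose proof (I0 e t mid ltac:(lra) H ltac:(unfold mid; lra)). lra.
    - subst; auto.
    - pose proof (I1 e mid t ltac:(unfold mid; lra) H ltac:(lra)).
      pose proof (I0 e mid t ltac:(unfold mid; lra) H ltac:(lra)). lra. }
  assert (ER : SR c e = SR c0 e + K).
  { assert (F : filterlim (fun t => 1 * c0 e t + K * 1) (at_right (ea e)) (locally (1 * SR c0 e + K * 1))).
    { apply (lim_lin (at_right (ea e)) _ _ _ _ _ _ (R0 e) (filterlim_const 1)). }
    replace (SR c0 e + K) with (1 * SR c0 e + K * 1) by ring.
    apply (lim_unique (at_right (ea e)) (c e)); auto.
    eapply filterlim_ext_loc; [|exact F].
    eapply filter_imp; [|apply (ev_right (ea e) (eb e) Hab)]. intros x Hx.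
    specialize (HK x Hx). lra. }
  assert (EL : SL c e = SL c0 e + K).
  { assert (F : filterlim (fun t => 1 * c0 e t + K * 1) (at_left (eb e)) (locally (1 * SL c0 e + K * 1))).
    { apply (lim_lin (at_left (eb e)) _ _ _ _ _ _ (L0 e) (filterlim_const 1)). }
    replace (SL c0 e + K) with (1 * SL c0 e + K * 1) by ring.
    apply (lim_unique (at_left (eb e)) (c e)); auto.
    eapply filterlim_ext_loc; [|exact F].
    eapply filter_imp; [|apply (ev_left (ea e) (eb e) Hab)]. intros x Hx.
    specialize (HK x Hx). lra. }
  split.
  - intros t Ht. rewrite HK by auto. lra.
  - lra.
Qed.

Lemma end_nonpos (M : MeasuredReebGraph) c : TN M c -> forall e, SL c e <= 0.
Proof.
  intros [Hc Ht] e.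
  destruct (circ_props M c Hc) as [C1 [R1 [L1 [I1 K1]]]].
  assert (HinE : forall e, In e (lE M)) by (intros e'; apply (proj2 (lE_listing M))).
  destruct (valence (mG M) (tgt e)) as [[e1 [He1 Hu]]|Htri].
  - assert (Ee : e = e1) by (apply Hu; right; auto). subst e1.
    specialize (K1 (tgt e)).
    rewrite !sum_edges_eq in K1.
    rewrite (sumL_single (lE M) (fun e' => tgt e' = tgt e) e (SL c)) in K1.
    + rewrite sumL_zero in K1; [lra|].
      intros y _. destruct (excluded_middle_informative _) as [p|]; auto.
      assert (y = e) by (apply Hu; left; auto). subst y.
      pose proof (edge_incr (mG M) e). rewrite p in H. lra.
    + apply (proj1 (lE_listing M)).
    + apply HinE.
    + intros y; split; intros Hy; [|subst; auto]. symmetry. apply Hu. right; auto.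
  - destruct (proj2 (Ht e) Htri) as [l [Hl F]]. unfold SL. rewrite (limL_spec _ _ _ F). lra.
Qed.

Lemma group (M : MeasuredReebGraph) (lv : list (rV M)) (sel : rE M -> rV M) F :
  NoDup lv -> (forall v, In v lv) ->
  sumL (lE M) (fun e => fv (sel e) * F e) =
  sumL lv (fun v => fv v * sum_edges (fun e => sel e = v) F).
Proof.
  intros Hn Hf.
  transitivity (sumL (lE M) (fun e => sumL lv (fun v =>
      if excluded_middle_informative (sel e = v) then fv v * F e else 0))).
  - apply sumL_ext. intros e _. symmetry.
    apply (sumL_single lv (fun v => sel e = v) (sel e) (fun v => fv v * F e)); auto.
    intros; split; auto.
  - rewrite sumL_swap. apply sumL_ext. intros v _.
    rewrite sum_edges_eq, <- sumL_scal. apply sumL_ext. intros e _.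
    destruct (excluded_middle_informative _); ring.
Qed.

Lemma identity (M : MeasuredReebGraph) c : is_circulation M c ->
  sumL (lE M) (fun e => fv (tgt e) * SL c e) = sumL (lE M) (fun e => fv (src e) * SR c e).
Proof.
  intros Hc. destruct (circ_props M c Hc) as [C1 [R1 [L1 [I1 K1]]]].
  assert (Hfin : Finite' (rV M)).
  { apply Finite_dec. split; [apply V_finite|]. intros x y. apply classic. }
  destruct Hfin as [lv [Hn Hf]].
  rewrite (group M lv tgt (SL c) Hn Hf), (group M lv src (SR c) Hn Hf).
  apply sumL_ext. intros v _. rewrite K1. reflexivity.
Qed.

Lemma abs3 x y z : Rabs (x - y - z) <= Rabs x + Rabs y + Rabs z.
Proof.
  unfold Rminus. eapply Rle_trans; [apply Rabs_triang|].
  eapply Rle_trans; [apply Rplus_le_compat_r; apply Rabs_triang|].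
  rewrite !Rabs_Ropp. lra.
Qed.

Lemma part4 (M : MeasuredReebGraph) :
  exists B, forall c, TN M c -> forall e t, ea e < t < eb e -> Rabs (c e t) <= B.
Proof.
  destruct (classic (exists c0, TN M c0)) as [[c0 H0]|Hno].
  2:{ exists 0. intros c Hc. exfalso. apply Hno. exists c; auto. }
  pose proof H0 as [Hc0 _].
  destruct (circ_props M c0 Hc0) as [C0 [R0 [L0 [I0 K0]]]].
  set (D := fun e => SL c0 e - SR c0 e).
  set (K := sumL (lE M) (fun e => fv (src e) * D e)).
  assert (HinE : forall e, In e (lE M)) by (intros e'; apply (proj2 (lE_listing M))).
  assert (Hper : forall e, exists B, forall B', B <= B' ->
     forall c, TN M c -> forall t, ea e < t < eb e -> Rabs (c e t) <= B').
  { intros e.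
    pose proof (edge_incr (mG M) e) as Hab. fold (ea e) (eb e) in Hab.
    destruct (cont_bounded (c0 e) (ea e) (eb e) (SR c0 e) (SL c0 e) Hab (C0 e) (R0 e) (L0 e)) as [B0 HB0].
    exists (B0 + K / (eb e - ea e) + Rabs (D e) + Rabs (SR c0 e)).
    intros B' HB' c Hc t Ht.
    pose proof Hc as [Hcc _].
    destruct (diff_const M c c0 Hcc Hc0 e) as [Ht1 Ht2].
    assert (Hsum : sumL (lE M) (fun e' => (fv (tgt e') - fv (src e')) * (- SL c e')) = K).
    { unfold K.
      transitivity (sumL (lE M) (fun e' => fv (src e') * D e' -
                       (fv (tgt e') * SL c e' - fv (src e') * SR c e'))).
      - apply sumL_ext. intros e' _.
        destruct (diff_const M c c0 Hcc Hc0 e') as [_ Hd]. unfold D. nra.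
      - rewrite sumL_minus, (sumL_minus _ (fun e' => fv (tgt e') * SL c e')).
        rewrite (identity M c Hcc). ring. }
    assert (Hle : (fv (tgt e) - fv (src e)) * (- SL c e) <= K).
    { rewrite <- Hsum. apply (sumL_le (lE M) (fun e' => (fv (tgt e') - fv (src e')) * (- SL c e'))); auto.
      intros y _. pose proof (edge_incr (mG M) y). pose proof (end_nonpos M c Hc y). nra. }
    assert (Hneg : SL c e <= 0) by (apply (end_nonpos M c Hc)).
    assert (Hdab : 0 < eb e - ea e) by lra.
    assert (HSL : - SL c e <= K / (eb e - ea e)).
    { apply (Rmult_le_reg_l (eb e - ea e)); auto. unfold Rdiv.
      rewrite <- Rmult_assoc, Rinv_r_simpl_m by lra. unfold ea, eb. lra. }
    specialize (Ht1 t Ht). specialize (HB0 t Ht).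
    assert (E : c e t = c0 e t + (SL c e - D e - SR c0 e)) by (unfold D; lra).
    rewrite E.
    eapply Rle_trans; [apply Rabs_triang|].
    assert (Rabs (SL c e - D e - SR c0 e) <= K / (eb e - ea e) + Rabs (D e) + Rabs (SR c0 e)).
    { eapply Rle_trans; [apply abs3|].
      rewrite (Rabs_left1 (SL c e)) by auto. lra. }
    lra. }
  destruct (bound_list (lE M) (fun e B => forall c, TN M c -> forall t, ea e < t < eb e -> Rabs (c e t) <= B)
              (fun e _ => Hper e)) as [B HB].
  exists B. intros c Hc e t Ht. apply (HB B (Rle_refl B) e (HinE e) c Hc t Ht).
Qed.

Theorem theorem4p25 (M : MeasuredReebGraph) :
  (exists (k : nat) (L : nat -> (rE M -> R -> R) -> R),
     (forall i c c' lam, (i < k)%nat -> is_circulation M c -> is_circulation M c' ->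
        L i (comb lam c c') = lam * L i c + (1 - lam) * L i c') /\
     (forall c, TN M c <-> (is_circulation M c /\ forall i, (i < k)%nat -> L i c < 0))) /\
  (forall c c' lam, 0 <= lam <= 1 -> TN M c -> TN M c' -> TN M (comb lam c c')) /\
  (forall c, TN M c -> exists eps, 0 < eps /\
     forall c', is_circulation M c' ->
       (forall e t, ea e < t < eb e -> Rabs (c' e t - c e t) < eps) -> TN M c') /\
  (exists B, forall c, TN M c -> forall e t, ea e < t < eb e -> Rabs (c e t) <= B).
Proof.
  split; [apply part1|]. split; [apply part2|]. split; [apply part3|]. apply part4.
Qed.
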